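(* For every formula $A$ of $\mathbf{L_1}$: $\vdash_{\mathbf{HL_1}}A$ if and only if $\dashv_H A$ (i.e. $A$ is a theorem of $\mathbf{HAR}$).
   Context: Formulas of $\mathbf{L_1}$: built from atomic formulas $\epsilon ab$ ($a,b$ name variables, possibly equal) with primitive connectives $\vee,\sim$; $\wedge,\supset,\equiv$ defined as usual. Disjunctions may be associated in any way. $\vdash_H A$: $A$ belongs to the smallest set containing all instances of classical propositional tautologies and all formulas $\epsilon ab\supset\epsilon aa$, $(\epsilon ab\wedge\epsilon bc)\supset\epsilon ac$, $(\epsilon ab\wedge\epsilon bb)\supset\epsilon ba$, closed under modus ponens. Positive/negative parts (occurrences): $A$ is a positive part of $A$; if $B\vee C$ is a positive part then $B,C$ are positive parts; if $\sim B$ is a positive part then $B$ is a negative part; if $\sim B$ is a negative part then $B$ is a positive part. $F[B_+,B_-]$ denotes a formula in which some $B$ has one occurrence as positive part and another non-overlapping occurrence as negative part. Hintikka formula: a formula $H$ such that (1) $H$ is not of the form $F[B_+,B_-]$; (2) if $B\vee C$ is a negative part of $H$ then $B$ or $C$ is; (3) if $\epsilon ab$ is a negative part then so is $\epsilon aa$; (4) if $\epsilon ab,\epsilon bc$ are negative parts then so is $\epsilon ac$; (5) if $\epsilon ab,\epsilon bb$ are negative parts then so is $\epsilon ba$. $\mathbf{HAR}$: fix a name variable $a_0$; $\dashv_H$ is the smallest set such that $\dashv_H\epsilon a_0a_0$; $\dashv_H\sim\epsilon a_0a_0$; if $\vdash_H A\supset B$ and $\dashv_H B$ then $\dashv_H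 A$; if $\dashv_H A$ and $A$ is obtained from $B$ by uniform substitution of name variables for name variables then $\dashv_H B$; if $A$ is a Hintikka formula that is a disjunction of atomic or negated atomic formulas, $\dashv_H A$, and $\epsilon ab$ is not a negative part of $A$, then $\dashv_H A\vee\epsilon ab$. $\mathbf{HL_1}$: $\vdash_{\mathbf{HL_1}}$ is the smallest set of formulas containing every Hintikka formula and such that $\vdash_H A\supset B$ and $\vdash_{\mathbf{HL_1}}B$ imply $\vdash_{\mathbf{HL_1}}A$. *)

(* Defs.v *)
From Stdlib Require Import List Bool.
Import ListNotations.

Definition name := nat.

Inductive formula : Type :=
| Eps : name -> name -> formula
| Or  : formula -> formula -> formula
| Not : formula -> formula.

Definition Imp (A B : formula) : formula := Or (Not A) B.
Definition And (A B : formula) : formula := Not (Or (Not A) (Not B)).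
Definition Iff (A B : formula) : formula := And (Imp A B) (Imp B A).

Fixpoint eval (v : name -> name -> bool) (A : formula) : bool :=
  match A with
  | Eps a b => v a b
  | Or B C => eval v B || eval v C
  | Not B => negb (eval v B)
  end.

Definition tautology (A : formula) : Prop := forall v, eval v A = true.

Inductive provH : formula -> Prop :=
| H_taut : forall A, tautology A -> provH A
| H_ax1 : forall a b, provH (Imp (Eps a b) (Eps a a))
| H_ax2 : forall a b c, provH (Imp (And (Eps a b) (Eps b c)) (Eps a c))
| H_ax3 : forall a b, provH (Imp (And (Eps a b) (Eps b b)) (Eps b a))
| H_mp : forall A B, provH (Imp A B) -> provH A -> provH B.

(* Occurrences of parts are addressed by paths from the root. *)
Inductive dir : Type := dL | dR | dN.

(* [sub pos A p] : the subformula reached from A along path p, provided every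
   step is licensed by the positive/negative-part rules (A itself having
   polarity [pos], true = positive), together with its polarity. *)
Fixpoint sub (pos : bool) (A : formula) (p : list dir) : option (formula * bool) :=
  match p with
  | [] => Some (A, pos)
  | d :: p' =>
      match d, A with
      | dL, Or B _ => if pos then sub pos B p' else None
      | dR, Or _ C => if pos then sub pos C p' else None
      | dN, Not B => sub (negb pos) B p'
      | _, _ => None
      end
  end.

Definition pos_part (A B : formula) : Prop :=
  exists p, sub true A p = Some (B, true).
Definition neg_part (A B : formula) : Prop :=
  exists p, sub true A p = Some (B, false).

Fixpoint is_prefix (p q : list dir) : Prop :=
  match p, q with
  | [], _ => True
  | d :: p', e :: q' => d = e /\ is_prefix p' q'
  | _ :: _, [] => False
  end.

(* A is of the form F[B_+, B_-]. *)
Definition has_pos_neg (A : formula) : Prop :=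
  exists B p q,
    sub true A p = Some (B, true) /\ sub true A q = Some (B, false) /\
    ~ is_prefix p q /\ ~ is_prefix q p.

Definition hintikka (H : formula) : Prop :=
  ~ has_pos_neg H /\
  (forall B C, neg_part H (Or B C) -> neg_part H B \/ neg_part H C) /\
  (forall a b, neg_part H (Eps a b) -> neg_part H (Eps a a)) /\
  (forall a b c, neg_part H (Eps a b) -> neg_part H (Eps b c) ->
                 neg_part H (Eps a c)) /\
  (forall a b, neg_part H (Eps a b) -> neg_part H (Eps b b) ->
               neg_part H (Eps b a)).

Inductive literal : formula -> Prop :=
| lit_pos : forall a b, literal (Eps a b)
| lit_neg : forall a b, literal (Not (Eps a b)).

Inductive lit_disj : formula -> Prop :=
| ld_lit : forall A, literal A -> lit_disj A
| ld_or : forall A B, lit_disj A -> lit_disj B -> lit_disj (Or A B).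

Fixpoint subst (s : name -> name) (A : formula) : formula :=
  match A with
  | Eps a b => Eps (s a) (s b)
  | Or B C => Or (subst s B) (subst s C)
  | Not B => Not (subst s B)
  end.

Inductive refH (a0 : name) : formula -> Prop :=
| R_ax1 : refH a0 (Eps a0 a0)
| R_ax2 : refH a0 (Not (Eps a0 a0))
| R_mp : forall A B, provH (Imp A B) -> refH a0 B -> refH a0 A
| R_subst : forall A B (s : name -> name),
    refH a0 A -> A = subst s B -> refH a0 B
| R_ext : forall A a b,
    hintikka A -> lit_disj A -> refH a0 A -> ~ neg_part A (Eps a b) ->
    refH a0 (Or A (Eps a b)).

Inductive provHL1 : formula -> Prop :=
| HL1_hint : forall A, hintikka A -> provHL1 A
| HL1_back : forall A B, provH (Imp A B) -> provHL1 B -> provHL1 A.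

(* Main.v *)
Require Import Defs.
From Stdlib Require Import List Bool Lia ClassicalEpsilon.
Import ListNotations.

Definition adm (v : name -> name -> bool) : Prop :=
  (forall a b, v a b = true -> v a a = true) /\
  (forall a b c, v a b = true -> v b c = true -> v a c = true) /\
  (forall a b, v a b = true -> v b b = true -> v b a = true).

Definition invalid (A : formula) : Prop := exists v, adm v /\ eval v A = false.

Lemma eval_imp v A B : eval v (Imp A B) = negb (eval v A) || eval v B.
Proof. reflexivity. Qed.

Lemma provH_sound A : provH A -> forall v, adm v -> eval v A = true.
Proof.
  induction 1; intros v Hadm; pose proof Hadm as [h1 [h2 h3]]; unfold Imp, And in *; simpl in *.
  - apply H.
  - destruct (v a b) eqn:E; simpl; auto; try (rewrite (h1 _ _ E); reflexivity).
  - destruct (v a b) eqn:E1, (v b c) eqn:E2; simpl; auto; try (rewrite (h2 _ _ _ E1 E2); reflexivity).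
  - destruct (v a b) eqn:E1, (v b b) eqn:E2; simpl; auto; try (rewrite (h3 _ _ E1 E2); reflexivity).
  - specialize (IHprovH1 v Hadm). specialize (IHprovH2 v Hadm).
    rewrite IHprovH2 in IHprovH1. simpl in IHprovH1. exact IHprovH1.
Qed.

Lemma eval_subst v s B : eval v (subst s B) = eval (fun x y => v (s x) (s y)) B.
Proof. induction B; simpl; congruence. Qed.

Lemma sub_app pos A p q : sub pos A (p ++ q) =
  match sub pos A p with Some (B, b) => sub b B q | None => None end.
Proof.
  revert pos A; induction p as [|d p IH]; intros pos A; [destruct A; reflexivity|].
  destruct d, A; try destruct pos; simpl; try apply IH; reflexivity.
Qed.

Fixpoint fsize F := match F with Eps _ _ => 1 | Or A B => S (fsize A + fsize B) | Not A => S (fsize A) end.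

Lemma sub_nil pos X : sub pos X [] = Some (X, pos).
Proof. destruct X; reflexivity. Qed.

Lemma sub_size r : forall pos X Y b, sub pos X r = Some (Y, b) -> r = [] \/ fsize Y < fsize X.
Proof.
  induction r as [|d r IH]; intros pos X Y b H; [left; reflexivity|right].
  destruct d, X; simpl in H; try destruct pos; try discriminate;
  destruct (IH _ _ _ _ H) as [->|Hl]; try rewrite sub_nil in H; simpl in *; try (injection H; intros; subst); simpl; lia.
Qed.

Lemma prefix_app p : forall q, is_prefix p q -> exists r, q = p ++ r.
Proof.
  induction p as [|d p IH]; intros q H; [exists q; reflexivity|].
  destruct q as [|e q]; simpl in H; [contradiction|]. destruct H as [-> H].
  destruct (IH _ H) as [r ->]. exists r; reflexivity.
Qed.

Lemma same_pol F p q X b1 b2 : sub true F p = Some (X, b1) -> sub true F q = Some (X, b2) -> is_prefix p q -> b1 = b2.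
Proof.
  intros Hp Hq Hpre. destruct (prefix_app _ _ Hpre) as [r ->].
  rewrite sub_app, Hp in Hq. destruct (sub_size _ _ _ _ _ Hq) as [->|Hl].
  - rewrite sub_nil in Hq. congruence.
  - lia.
Qed.

Lemma pos_or_l F B C : pos_part F (Or B C) -> pos_part F B.
Proof. intros [p Hp]; exists (p ++ [dL]); rewrite sub_app, Hp; simpl; apply sub_nil. Qed.
Lemma pos_or_r F B C : pos_part F (Or B C) -> pos_part F C.
Proof. intros [p Hp]; exists (p ++ [dR]); rewrite sub_app, Hp; simpl; apply sub_nil. Qed.
Lemma pos_not F B : pos_part F (Not B) -> neg_part F B.
Proof. intros [p Hp]; exists (p ++ [dN]); rewrite sub_app, Hp; simpl; apply sub_nil. Qed.
Lemma neg_not F B : neg_part F (Not B) -> pos_part F B.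
Proof. intros [p Hp]; exists (p ++ [dN]); rewrite sub_app, Hp; simpl; apply sub_nil. Qed.

Definition vH (F : formula) : name -> name -> bool :=
  fun x y => if excluded_middle_informative (neg_part F (Eps x y)) then true else false.

Lemma vH_spec F x y : vH F x y = true <-> neg_part F (Eps x y).
Proof.
  unfold vH; destruct (excluded_middle_informative _) as [h|h]; split; intro;
  try discriminate; auto; contradiction.
Qed.

Lemma hint_val F : hintikka F -> adm (vH F) /\ eval (vH F) F = false.
Proof.
  intros [h1 [h2 [h3 [h4 h5]]]].
  assert (key : forall X, (pos_part F X -> eval (vH F) X = false) /\ (neg_part F X -> eval (vH F) X = true)).
  { induction X as [a b|X1 IH1 X2 IH2|X IH]; split; intro Hx.
    - simpl. destruct (vH F a b) eqn:E; auto. apply vH_spec in E. exfalso. apply h1.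
      destruct Hx as [p Hp], E as [q Hq]. exists (Eps a b), p, q. split; [exact Hp|split;[exact Hq|split]].
      + intro Hpre. pose proof (same_pol _ _ _ _ _ _ Hp Hq Hpre). discriminate.
      + intro Hpre. pose proof (same_pol _ _ _ _ _ _ Hq Hp Hpre). discriminate.
    - simpl. apply vH_spec. exact Hx.
    - simpl. rewrite (proj1 IH1 (pos_or_l _ _ _ Hx)), (proj1 IH2 (pos_or_r _ _ _ Hx)). reflexivity.
    - simpl. destruct (h2 _ _ Hx) as [H1|H1]; [rewrite (proj2 IH1 H1)|rewrite (proj2 IH2 H1), orb_true_r]; reflexivity.
    - simpl. rewrite (proj2 IH (pos_not _ _ Hx)). reflexivity.
    - simpl. rewrite (proj1 IH (neg_not _ _ Hx)). reflexivity. }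
  split.
  - repeat split.
    + intros a b E. apply vH_spec. apply h3 with b. apply vH_spec. exact E.
    + intros a b c E1 E2. apply vH_spec. apply h4 with b; apply vH_spec; assumption.
    + intros a b E1 E2. apply vH_spec. apply h5; apply vH_spec; assumption.
  - apply (proj1 (key F)). exists []. apply sub_nil.
Qed.

Fixpoint lits (F : formula) : list formula :=
  match F with Or A B => lits A ++ lits B | _ => [F] end.

Lemma sub_ld F : lit_disj F -> forall p X b, sub true F p = Some (X, b) ->
  (b = false -> exists a c, X = Eps a c /\ In (Not (Eps a c)) (lits F)) /\
  (forall a c, X = Eps a c -> b = true -> In (Eps a c) (lits F)).
Proof.
  induction 1 as [L HL|A B HA IHA HB IHB]; intros p X b Hs.
  - destruct HL as [a c|a c].
    + destruct p as [|d p]; [simpl in Hs|destruct d; simpl in Hs; discriminate].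
      injection Hs as <- <-. split; [intro Hb; discriminate|]. intros a' c' E _. rewrite <- E. simpl; auto.
    + destruct p as [|d p]; [simpl in Hs|].
      * injection Hs as <- <-. split; [intro Hb; discriminate|]. intros a' c' E _; discriminate.
      * destruct d; simpl in Hs; try discriminate.
        destruct p as [|d p]; [simpl in Hs|destruct d; simpl in Hs; discriminate].
        injection Hs as <- <-. split; [|intros; discriminate]. intros _. exists a, c. simpl; auto.
  - destruct p as [|d p]; [simpl in Hs|].
    + injection Hs as <- <-. split; [intro Hb; discriminate|]. intros a c E; discriminate.
    + destruct d; simpl in Hs; try discriminate.
      * destruct (IHA _ _ _ Hs) as [h1 h2]. split.
        -- intro Hb. destruct (h1 Hb) as [a [c [E Hi]]]. exists a, c. split; auto. simpl. apply in_or_app; auto.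
        -- intros a c E Hb. simpl. apply in_or_app; left; eauto.
      * destruct (IHB _ _ _ Hs) as [h1 h2]. split.
        -- intro Hb. destruct (h1 Hb) as [a [c [E Hi]]]. exists a, c. split; auto. simpl. apply in_or_app; auto.
        -- intros a c E Hb. simpl. apply in_or_app; right; eauto.
Qed.

Lemma neg_in F : lit_disj F -> forall a c, In (Not (Eps a c)) (lits F) -> neg_part F (Eps a c).
Proof.
  induction 1 as [L HL|A B HA IHA HB IHB]; intros a c Hi.
  - destruct HL as [a' c'|a' c']; simpl in Hi; destruct Hi as [E|[]]; try discriminate.
    inversion E; subst. exists [dN]. reflexivity.
  - simpl in Hi. apply in_app_or in Hi. destruct Hi as [Hi|Hi].
    + destruct (IHA _ _ Hi) as [p Hp]. exists (dL :: p). simpl. exact Hp.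
    + destruct (IHB _ _ Hi) as [p Hp]. exists (dR :: p). simpl. exact Hp.
Qed.

Definition good (L : list formula) : Prop :=
  (forall a b, In (Not (Eps a b)) L -> In (Eps a b) L -> False) /\
  (forall a b, In (Not (Eps a b)) L -> In (Not (Eps a a)) L) /\
  (forall a b c, In (Not (Eps a b)) L -> In (Not (Eps b c)) L -> In (Not (Eps a c)) L) /\
  (forall a b, In (Not (Eps a b)) L -> In (Not (Eps b b)) L -> In (Not (Eps b a)) L).

Lemma neg_iff F : lit_disj F -> forall X, neg_part F X <-> exists a c, X = Eps a c /\ In (Not (Eps a c)) (lits F).
Proof.
  intros HF X; split.
  - intros [p Hp]. exact (proj1 (sub_ld F HF p X false Hp) eq_refl).
  - intros [a [c [-> Hi]]]. apply neg_in; auto.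
Qed.

Lemma hint_good F : lit_disj F -> good (lits F) -> hintikka F.
Proof.
  intros HF [g1 [g2 [g3 g4]]].
  assert (Hne: forall a c, neg_part F (Eps a c) <-> In (Not (Eps a c)) (lits F)).
  { intros a c. rewrite neg_iff by exact HF. split.
    - intros [a' [c' [E Hi]]]. injection E as -> ->. exact Hi.
    - intros Hi. exists a, c. auto. }
  unfold hintikka. repeat split.
  - intros [B [p [q [Hp [Hq _]]]]].
    destruct (proj1 (sub_ld F HF q B false Hq) eq_refl) as [a [c [-> Hi]]].
    apply (g1 a c Hi). exact (proj2 (sub_ld F HF p _ true Hp) a c eq_refl eq_refl).
  - intros B C Hn. apply neg_iff in Hn; auto. destruct Hn as [? [? [E _]]]; discriminate.
  - intros a b Hn. apply Hne. apply (g2 a b). apply Hne. exact Hn.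
  - intros a b c H1 H2. apply Hne. apply (g3 a b c); apply Hne; assumption.
  - intros a b H1 H2. apply Hne. apply g4; apply Hne; assumption.
Qed.

Definition PE (x : name * name) := Eps (fst x) (snd x).
Definition NE (x : name * name) := Not (Eps (fst x) (snd x)).
Definition foldO (g : name*name -> formula) l base := fold_left (fun F x => Or F (g x)) l base.

Lemma lits_foldO g l : forall base, (forall x, lits (g x) = [g x]) -> lits (foldO g l base) = lits base ++ map g l.
Proof.
  unfold foldO. induction l as [|x l IH]; intros base Hg; simpl.
  - rewrite app_nil_r; reflexivity.
  - rewrite IH by exact Hg. simpl. rewrite Hg, <- app_assoc. reflexivity.
Qed.

Lemma ld_foldO g l : forall base, (forall x, literal (g x)) -> lit_disj base -> lit_disj (foldO g l base).
Proof.
  unfold foldO; induction l as [|x l IH]; intros base Hg Hb; simpl; auto.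
  apply IH; auto. apply ld_or; auto. apply ld_lit; auto.
Qed.

Lemma notin_PE l a b : In (Not (Eps a b)) (map PE l) -> False.
Proof. intro H. apply in_map_iff in H. destruct H as [x [E _]]. discriminate. Qed.

Lemma good_prefix L1 L2 : good (L1 ++ map PE L2) -> good L1.
Proof.
  intros [g1 [g2 [g3 g4]]].
  assert (R: forall a b, In (Not (Eps a b)) (L1 ++ map PE L2) -> In (Not (Eps a b)) L1).
  { intros a b Hi. apply in_app_or in Hi. destruct Hi as [Hi|Hi]; auto. exfalso; eapply notin_PE; eauto. }
  unfold good. repeat split.
  - intros a b H1 H2. apply (g1 a b); apply in_or_app; left; auto.
  - intros a b H1. apply R. apply (g2 a b). apply in_or_app; auto.
  - intros a b c H1 H2. apply R. apply (g3 a b c); apply in_or_app; auto.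
  - intros a b H1 H2. apply R. apply g4; apply in_or_app; auto.
Qed.

Lemma ext_list a0 l : forall F, refH a0 F -> lit_disj F -> good (lits F ++ map PE l) -> refH a0 (foldO PE l F).
Proof.
  induction l as [|x l IH]; intros F HR HF Hg; unfold foldO in *; simpl; auto.
  destruct x as [x1 x2].
  apply IH.
  - assert (Hh : hintikka F). { apply hint_good; auto. apply good_prefix with ((x1,x2)::l). exact Hg. }
    unfold PE; simpl. apply R_ext; auto. intro Hn. apply neg_iff in Hn; auto.
    destruct Hn as [a [c [E Hi]]]. injection E as -> ->.
    apply (proj1 Hg a c).
    + apply in_or_app; left; exact Hi.
    + apply in_or_app; right; left; reflexivity.
  - apply ld_or; auto. apply ld_lit; constructor.
  - simpl. rewrite <- app_assoc. exact Hg.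
Qed.

Fixpoint names (F : formula) : list name :=
  match F with Eps a b => [a; b] | Or A B => names A ++ names B | Not A => names A end.

Lemma eval_names w v F : (forall a b, In a (names F) -> In b (names F) -> w a b = v a b) -> eval w F = eval v F.
Proof.
  induction F as [a b|A IHA B IHB|A IHA]; intros H; simpl.
  - apply H; simpl; auto.
  - rewrite IHA, IHB; auto; intros a b Ha Hb; apply H; apply in_or_app; auto.
  - rewrite IHA; auto.
Qed.

Lemma names_ne F : exists a, In a (names F).
Proof.
  induction F as [a b|A [a Ha] B _|A IH]; simpl; eauto.
  exists a; apply in_or_app; auto.
Qed.

Lemma eval_lits w F : eval w F = existsb (eval w) (lits F).
Proof. induction F; simpl; try rewrite orb_false_r; auto. rewrite existsb_app; congruence. Qed.

Lemma lits_subst s F : lits (subst s F) = map (subst s) (lits F).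
Proof. induction F; simpl; auto. rewrite map_app; congruence. Qed.

Lemma existsb_in {T : Type} (f : T -> bool) l x : existsb f l = false -> In x l -> f x = false.
Proof.
  induction l as [|y l IH]; simpl; [tauto|]. intros H [->|Hi]; apply orb_false_iff in H; destruct H; auto.
Qed.

Lemma existsb_all {T : Type} (f : T -> bool) l : (forall x, In x l -> f x = false) -> existsb f l = false.
Proof.
  induction l as [|y l IH]; simpl; auto. intros H. rewrite H by (left; reflexivity).
  apply IH. intros; apply H; right; auto.
Qed.

Lemma build a0 (Negs Poss : list (name*name)) : Negs <> [] \/ Poss <> [] ->
  good (map NE Negs ++ map PE Poss) ->
  exists H, lit_disj H /\ lits H = map NE Negs ++ map PE Poss /\ refH a0 H.
Proof.
  intros Hne Hg. destruct Negs as [|n0 nr].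
  - destruct Poss as [|[c d] pr]; [destruct Hne; congruence|].
    exists (foldO PE pr (PE (c,d))). split; [|split].
    + apply ld_foldO; [intros; constructor|]. apply ld_lit; constructor.
    + rewrite lits_foldO by (intros; reflexivity). reflexivity.
    + apply ext_list; [| apply ld_lit; constructor | exact Hg].
      apply R_mp with (Eps c c); [apply H_ax1|].
      apply R_subst with (Eps a0 a0) (fun _ => a0); [apply R_ax1|reflexivity].
  - set (Dneg := foldO NE nr (NE n0)).
    assert (HD : lits Dneg = map NE (n0 :: nr)).
    { unfold Dneg. rewrite lits_foldO by (intros; reflexivity). reflexivity. }
    assert (HDl : lit_disj Dneg).
    { unfold Dneg. apply ld_foldO; [intros; constructor|]. apply ld_lit; constructor. }
    exists (foldO PE Poss Dneg). split; [|split].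
    + apply ld_foldO; auto. intros; constructor.
    + rewrite lits_foldO by (intros; reflexivity). rewrite HD. reflexivity.
    + apply ext_list; [| exact HDl | rewrite HD; exact Hg].
      apply R_subst with (subst (fun _ => a0) Dneg) (fun _ => a0); [|reflexivity].
      apply R_mp with (Not (Eps a0 a0)); [|apply R_ax2].
      apply H_taut. intro w. rewrite eval_imp. simpl (eval w (Not _)).
      destruct (w a0 a0) eqn:E; [|rewrite orb_true_r; reflexivity].
      rewrite eval_lits, lits_subst, HD. rewrite existsb_all; [reflexivity|].
      intros x Hx. apply in_map_iff in Hx. destruct Hx as [y [<- Hy]].
      apply in_map_iff in Hy. destruct Hy as [z [<- _]].
      simpl. rewrite E. reflexivity.
Qed.

Lemma diagram a0 A : invalid A -> exists H, hintikka H /\ refH a0 H /\ tautology (Imp A H).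
Proof.
  intros [v [[h1 [h2 h3]] Hv]].
  remember (names A) as ns eqn:Ens.
  remember (filter (fun x => v (fst x) (snd x)) (list_prod ns ns)) as Negs eqn:ENegs.
  remember (filter (fun x => negb (v (fst x) (snd x))) (list_prod ns ns)) as Poss eqn:EPoss.
  assert (Hneg : forall a b, In (a,b) Negs <-> In a ns /\ In b ns /\ v a b = true).
  { intros a b. subst Negs. rewrite filter_In, in_prod_iff. simpl. tauto. }
  assert (Hpos : forall a b, In (a,b) Poss <-> In a ns /\ In b ns /\ v a b = false).
  { intros a b. subst Poss. rewrite filter_In, in_prod_iff. simpl. rewrite negb_true_iff. tauto. }
  set (L := map NE Negs ++ map PE Poss).
  assert (HLn : forall a b, In (Not (Eps a b)) L <-> In (a,b) Negs).
  { intros a b; unfold L; split.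
    - intro Hi. apply in_app_or in Hi. destruct Hi as [Hi|Hi].
      + apply in_map_iff in Hi. destruct Hi as [[x y] [E Hi]]. unfold NE in E; simpl in E.
        injection E as -> ->. exact Hi.
      + exfalso; eapply notin_PE; eauto.
    - intro Hi. apply in_or_app; left. change (Not (Eps a b)) with (NE (a,b)). apply in_map; exact Hi. }
  assert (HLp : forall a b, In (Eps a b) L <-> In (a,b) Poss).
  { intros a b; unfold L; split.
    - intro Hi. apply in_app_or in Hi. destruct Hi as [Hi|Hi].
      + apply in_map_iff in Hi. destruct Hi as [x [E _]]. discriminate.
      + apply in_map_iff in Hi. destruct Hi as [[x y] [E Hi]]. unfold PE in E; simpl in E.
        injection E as -> ->. exact Hi.
    - intro Hi. apply in_or_app; right. change (Eps a b) with (PE (a,b)). apply in_map; exact Hi. }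
  assert (Hgood : good L).
  { unfold good. repeat split.
    - intros a b H1 H2. apply HLn, Hneg in H1. apply HLp, Hpos in H2.
      destruct H1 as [_ [_ E1]], H2 as [_ [_ E2]]. congruence.
    - intros a b H1. apply HLn, Hneg in H1. apply HLn, Hneg. destruct H1 as [Ha [Hb E]].
      repeat split; auto. eapply h1; eauto.
    - intros a b c H1 H2. apply HLn, Hneg in H1. apply HLn, Hneg in H2. apply HLn, Hneg.
      destruct H1 as [Ha [Hb E1]], H2 as [_ [Hc E2]]. repeat split; eauto.
    - intros a b H1 H2. apply HLn, Hneg in H1. apply HLn, Hneg in H2. apply HLn, Hneg.
      destruct H1 as [Ha [Hb E1]], H2 as [_ [_ E2]]. repeat split; auto. }
  assert (Hnn : Negs <> [] \/ Poss <> []).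
  { destruct (names_ne A) as [a Ha]. rewrite <- Ens in Ha.
    destruct (v a a) eqn:E.
    - left. intro Z. assert (In (a,a) Negs) as Hi by (apply Hneg; auto). rewrite Z in Hi; exact Hi.
    - right. intro Z. assert (In (a,a) Poss) as Hi by (apply Hpos; auto). rewrite Z in Hi; exact Hi. }
  destruct (build a0 Negs Poss Hnn Hgood) as [H [HHl [HHlits HHr]]].
  exists H. split; [|split; auto].
  - apply hint_good; auto. rewrite HHlits. exact Hgood.
  - intro w. rewrite eval_imp. destruct (eval w H) eqn:EH; [rewrite orb_true_r; reflexivity|].
    rewrite orb_false_r. rewrite (eval_names w v A); [rewrite Hv; reflexivity|].
    intros a b Ha Hb. rewrite <- Ens in Ha, Hb. rewrite eval_lits, HHlits in EH.
    destruct (v a b) eqn:E.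
    + assert (Hi : In (Not (Eps a b)) L) by (apply HLn, Hneg; auto).
      pose proof (existsb_in _ _ _ EH Hi) as X. simpl in X. destruct (w a b); auto.
    + assert (Hi : In (Eps a b) L) by (apply HLp, Hpos; auto).
      exact (existsb_in _ _ _ EH Hi).
Qed.

Lemma HL1_invalid A : provHL1 A -> invalid A.
Proof.
  induction 1 as [A Hh|A B HAB _ IH].
  - exists (vH A). apply hint_val; auto.
  - destruct IH as [v [Hadm Hv]]. exists v. split; auto.
    pose proof (provH_sound _ HAB v Hadm) as E. rewrite eval_imp, Hv, orb_false_r in E.
    apply negb_true_iff in E. exact E.
Qed.

Lemma refH_invalid a0 A : refH a0 A -> invalid A.
Proof.
  induction 1 as [ | | A B HAB _ IH | A B s _ IH E | A a b Hh _ _ _ Hn].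
  - exists (fun _ _ => false). split; [unfold adm; repeat split; intros; simpl in *; discriminate | reflexivity].
  - exists (fun _ _ => true). split; [unfold adm; repeat split; intros; reflexivity | reflexivity].
  - destruct IH as [v [Hadm Hv]]. exists v. split; auto.
    pose proof (provH_sound _ HAB v Hadm) as E. rewrite eval_imp, Hv, orb_false_r in E.
    apply negb_true_iff in E. exact E.
  - destruct IH as [v [[h1 [h2 h3]] Hv]]. exists (fun x y => v (s x) (s y)). split.
    + repeat split; intros; simpl in *; eauto.
    + rewrite <- eval_subst, <- E; exact Hv.
  - destruct (hint_val A Hh) as [Hadm Hv]. exists (vH A). split; auto.
    simpl. rewrite Hv. simpl. destruct (vH A a b) eqn:E; auto.
    exfalso; apply Hn; apply vH_spec; exact E.
Qed.

Theorem theorem9p3 (a0 : name) (A : formula) : provHL1 A <-> refH a0 A.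
Proof.
  split; intro H.
  - destruct (diagram a0 A (HL1_invalid A H)) as [F [_ [HR Ht]]].
    apply R_mp with F; auto. apply H_taut; exact Ht.
  - destruct (diagram a0 A (refH_invalid a0 A H)) as [F [Hh [_ Ht]]].
    apply HL1_back with F; [apply H_taut; exact Ht| apply HL1_hint; exact Hh].
Qed.
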